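(* Let $k\ge3$ and $m\ge1$ be integers and consider any realization of the random $k$-Apollonian network $A(m)$. For an edge $e$ of $A(m)$ let $N^{\ast}(e)$ be the number of active $k$-cliques of $A(m)$ containing $e$. Let $F$ be the spanning forest of $A(m)$ defined as follows: for each $1\le t\le m$, if the vertex $x$ born in round $t$ was joined to the $k$-clique $C$, then in $F$ the vertex $x$ is joined to a vertex $u\in V(C)$ with $N^{\ast}(xu)=\max_{v\in V(C)}N^{\ast}(xv)$ (ties broken arbitrarily). If $xy\in E(F)$, $x$ is born later than $y$, and the degree of $x$ in $A(m)$ is at least $2k-1$, then $N^{\ast}(xy)\ge (k-1)^2/2$.
   Context: Random $k$-Apollonian process: $A(0)$ is a clique on $k$ vertices (born in round $0$), marked active. For $t\ge1$, $A(t)$ is obtained from $A(t-1)$ by choosing an active $k$-clique of $A(t-1)$ uniformly at random and creating a new vertex (born in round $t$) joined to all its vertices; the chosen clique becomes non-active and the $k$ new $k$-cliques containing the new vertex are marked active. *)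

(* Defs.v *)
From mathcomp Require Import all_boot.
Set Implicit Arguments. Unset Strict Implicit. Unset Printing Implicit Defensive.

(* A realization of the random k-Apollonian process up to round m is encoded
   deterministically by a sequence [s] of choices: in round t (t >= 1) the
   clique chosen is the (nth 0 s (t-1))-th element of the list of active
   cliques of A(t-1).  Vertices are natural numbers: the initial clique is
   {0,...,k-1} (born in round 0) and the vertex born in round t >= 1 is k+t-1.
   A k-clique is represented by the list of its vertices. *)

Fixpoint active (k : nat) (s : seq nat) (t : nat) : seq (seq nat) :=
  match t with
  | 0 => [:: iota 0 k]
  | t'.+1 =>
      let A := active k s t' in
      let i := nth 0 s t' in
      let C := nth [::] A i in
      (take i A ++ drop i.+1 A) ++ [seq (k + t') :: rem v C | v <- C]
  end.

Definition chosen (k : nat) (s : seq nat) (t : nat) : seq nat :=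
  nth [::] (active k s t.-1) (nth 0 s t.-1).

Definition realization (k m : nat) (s : seq nat) : Prop :=
  size s = m /\ forall t, t < m -> nth 0 s t < size (active k s t).

Definition born (k v : nat) : nat := if k <= v then v - k + 1 else 0.

Definition vertexA (k m v : nat) : bool := v < k + m.

Definition adjA (k : nat) (s : seq nat) (x y : nat) : bool :=
  (x != y) &&
  [|| (x < k) && (y < k),
      (k <= x) && (y \in chosen k s (born k x))
    | (k <= y) && (x \in chosen k s (born k y))].

Definition degA (k m : nat) (s : seq nat) (x : nat) : nat :=
  count (adjA k s x) (iota 0 (k + m)).

Definition Nstar (k m : nat) (s : seq nat) (x y : nat) : nat :=
  count (fun C => (x \in C) && (y \in C)) (active k s m).

Definition forest_parent (k m : nat) (s : seq nat) (par : nat -> nat) : Prop :=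
  forall t, 1 <= t <= m ->
    let x := k + t - 1 in
    let C := chosen k s t in
    par x \in C /\ (forall v, v \in C -> Nstar k m s x v <= Nstar k m s x (par x)).

Definition edgeF (k m : nat) (par : nat -> nat) (x y : nat) : bool :=
  [|| (k <= x) && (x < k + m) && (par x == y)
    | (k <= y) && (y < k + m) && (par y == x)].

(* Main.v *)
Require Import Defs.
From mathcomp Require Import all_boot zify.
Set Implicit Arguments. Unset Strict Implicit. Unset Printing Implicit Defensive.

Lemma nth_nil_or_mem (A : seq (seq nat)) i :
  nth [::] A i = [::] \/ nth [::] A i \in A.
Proof.
case: (ltnP i (size A)) => h; [right; exact: mem_nth | left; exact: nth_default].
Qed.

Lemma act_inv k s T E : E \in active k s T ->
  [/\ uniq E, size E = k & all (fun v => v < k + T) E].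
Proof.
elim: T E => [|T IH] E /=.
- rewrite inE => /eqP ->; split; [exact: iota_uniq | exact: size_iota |].
  by apply/allP => v; rewrite mem_iota; lia.
- rewrite mem_cat => /orP [|].
  + rewrite mem_cat => /orP [/mem_take|/mem_drop] /IH [u sz al]; split => //;
    by apply/allP => v /(allP al); lia.
  + case/mapP => v vD ->.
    have DA : nth [::] (active k s T) (nth 0 s T) \in active k s T.
      case: (nth_nil_or_mem (active k s T) (nth 0 s T)) => [e|//].
      by move: vD; rewrite e.
    case: (IH _ DA) => u sz al.
    split.
    * rewrite /= rem_uniq // andbT. apply/negP => /mem_rem /(allP al); lia.
    * rewrite /= size_rem // sz prednK // -sz -has_predT; apply/hasP; by exists v.
    * rewrite /= addnS ltnSn /=; apply/allP => w /mem_rem /(allP al); lia.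
Qed.

Lemma chosen_bound k s T v : v \in chosen k s T -> v < k + T.-1.
Proof.
rewrite /chosen; case: (nth_nil_or_mem (active k s T.-1) (nth 0 s T.-1)) => [->//|].
by move=> /act_inv [_ _ /allP al] /al.
Qed.

Lemma count_sum (T : Type) (p : pred T) (l : seq T) : count p l = \sum_(a <- l) p a.
Proof. by elim: l => [|a l IH]; rewrite ?big_nil ?big_cons //= IH. Qed.

Lemma sum_const (T : Type) (l : seq T) c : \sum_(a <- l) c = size l * c.
Proof. by elim: l => [|a l IH]; rewrite ?big_nil ?big_cons //= IH mulSn. Qed.

Lemma sum_split_nth (F : seq nat -> nat) (A : seq (seq nat)) i : i < size A ->
  \sum_(E <- A) F E = \sum_(E <- take i A ++ drop i.+1 A) F E + F (nth [::] A i).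
Proof.
move=> h; rewrite -{1}(cat_take_drop i A) (drop_nth [::] h) !big_cat big_cons /=.
lia.
Qed.

Fixpoint Gf (K j : nat) : nat :=
  match j with 0 => 0 | j'.+1 => Gf K j' + (K.+2 - j') end.

Section Main.
Variables (K m : nat) (s : seq nat) (t : nat).
Hypothesis t1 : 0 < t.
Hypothesis tm : t <= m.
Hypothesis real : realization K.+3 m s.

Local Notation k := K.+3.
Local Notation xx := (K.+3 + t.-1).
Local Notation CC := (chosen K.+3 s t).

Definition bb (E : seq nat) := count (fun u => u \in E) CC.
Definition ff (E : seq nat) := if xx \in E then bb E else 0.
Definition SS T := \sum_(E <- active k s T) ff E.
Definition JJ T := count (fun T' => xx \in chosen k s T') (iota 1 T).
Definition Inv T := (forall E, E \in active k s T -> xx \in E -> K.+2 <= bb E + JJ T)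
   /\ k * K.+2 + K * Gf K (JJ T) <= SS T.

Lemma idx_ok T : T < m -> nth 0 s T < size (active k s T).
Proof. by case: real => _; apply. Qed.

Lemma CCin : CC \in active k s t.-1.
Proof. rewrite /chosen; apply: mem_nth; apply: idx_ok; lia. Qed.

Lemma CCprop : [/\ uniq CC, size CC = k & all (fun v => v < xx) CC].
Proof. by have [] := act_inv CCin. Qed.

Lemma xnC : xx \notin CC.
Proof. case: CCprop => _ _ /allP al; apply/negP => /al; lia. Qed.

Lemma JJ_base : JJ t = 0.
Proof.
rewrite /JJ; apply/eqP; rewrite -leqn0 leqNgt -has_count; apply/negP => /hasP [T'].
rewrite mem_iota => hT /chosen_bound; lia.
Qed.

Lemma JJ_step T : JJ T.+1 = JJ T + (xx \in chosen k s T.+1).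
Proof. rewrite /JJ. have -> : iota 1 T.+1 = iota 1 T ++ [:: T.+1] by have := iotaD 1 T 1; rewrite addn1 add1n. by rewrite count_cat /= addn0. Qed.

Lemma base : Inv t.
Proof.
case: CCprop => Cu Cs Cb.
have et : t = t.-1.+1 by lia.
have bnew : forall v, v \in CC -> bb (xx :: rem v CC) = K.+2.
  move=> v vC; rewrite /bb.
  rewrite (@eq_in_count _ _ (predC1 v)); last first.
    move=> u uC /=; rewrite in_cons (mem_rem_uniq _ Cu) inE uC andbT.
    case: eqP => // e; by move: xnC; rewrite -e uC.
  have := count_predC (pred1 v) CC; rewrite Cs count_uniq_mem // vC /= => h.
  have e : count (predC1 v) CC = count (predC (pred1 v)) CC by apply: eq_count.
  by rewrite e; apply/eqP; rewrite -(eqn_add2l 1) h.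
split.
- move=> E; rewrite JJ_base addn0 [active k s t](_ : _ = active k s t.-1.+1); last by rewrite prednK. rewrite /= mem_cat => /orP [|].
  + rewrite mem_cat => /orP [/mem_take|/mem_drop] /act_inv [_ _ /allP al] /al; lia.
  + by case/mapP => v vC -> _; rewrite bnew.
- rewrite JJ_base /= muln0 addn0 /SS [active k s t](_ : _ = active k s t.-1.+1); last by rewrite prednK. rewrite /= big_cat /= big_map.
  have eC : nth [::] (active k s t.-1) (nth 0 s t.-1) = CC by [].
  rewrite eC [X in _ <= _ + X](@eq_big_seq _ _ _ _ _ _ (fun _ => K.+2)); last first.
    by move=> v vC; rewrite /ff in_cons eqxx /= bnew.
  by rewrite sum_const Cs leq_addl.
Qed.


Lemma step T : t <= T -> T < m -> Inv T -> Inv T.+1.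
Proof.
move=> tT Tm [IH1 IH2].
case: CCprop => Cu Cs Cb.
set A := active k s T. set i := nth 0 s T. set D := nth [::] A i.
have iA : i < size A by apply: idx_ok.
have DA : D \in A by apply: mem_nth.
case: (act_inv DA) => Du Ds Db.
have eact : active k s T.+1 =
  (take i A ++ drop i.+1 A) ++ [seq (k + T) :: rem v D | v <- D] by [].
have eJ : JJ T.+1 = JJ T + (xx \in D) by rewrite JJ_step.
have zC : (k + T) \notin CC by apply/negP => /(allP Cb); lia.
have xz : xx != k + T by apply/eqP; lia.
have eS : SS T = \sum_(E <- take i A ++ drop i.+1 A) ff E + ff D
  by rewrite /SS (sum_split_nth _ iA).
have eS1 : SS T.+1 = \sum_(E <- take i A ++ drop i.+1 A) ff E
     + \sum_(v <- D) ff ((k+T) :: rem v D) by rewrite /SS eact big_cat big_map.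
have oldE : forall E, E \in take i A ++ drop i.+1 A -> E \in A.
  by move=> E; rewrite mem_cat => /orP [/mem_take|/mem_drop].
case xD: (xx \in D); last first.
  have f0 : forall v, v \in D -> ff ((k+T)::rem v D) = 0.
    move=> v _; rewrite /ff in_cons (negbTE xz) /=.
    by case: ifP => // /mem_rem; rewrite xD.
  rewrite /Inv eJ xD addn0; split.
  + move=> E; rewrite eact mem_cat => /orP [/oldE/IH1 //|/mapP [v vD ->]].
    by rewrite in_cons (negbTE xz) /= => /mem_rem; rewrite xD.
  + rewrite eS1 [X in _ <= _ + X]big1_seq ?addn0; last by move=> v /andP [_ vD]; apply: f0.
    by move: IH2; rewrite eS /ff xD addn0.
set F := [seq u <- CC | u \in D].
have Fu : uniq F by rewrite filter_uniq.
have bF : size F = bb D by rewrite size_filter.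
set c := fun v => count (pred1 v) F.
have c1 : forall v, c v <= 1 by move=> v; rewrite /c count_uniq_mem //; case: (_ \in _).
have key : forall v, v \in D -> v != xx ->
    xx \in (k+T)::rem v D /\ bb ((k+T)::rem v D) + c v = bb D.
  move=> v vD vx; split.
    by rewrite in_cons (mem_rem_uniq _ Du) inE (eq_sym xx v) vx xD orbT.
  rewrite -bF -(count_predC (pred1 v) F) addnC /c; congr (_ + _).
  rewrite count_filter /bb; apply: eq_in_count => u uC /=.
  rewrite in_cons (mem_rem_uniq _ Du) inE.
  have -> : (u == k + T) = false by apply/negP => /eqP e; move: zC; rewrite -e uC.
  by [].
have kx : xx \notin (k+T)::rem xx D.
  by rewrite in_cons (negbTE xz) (mem_rem_uniq _ Du) inE eqxx.
have sumc : \sum_(v <- D) c v <= bb D.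
  rewrite -bF (@eq_big_seq _ _ _ _ _ _ (fun v => nat_of_bool (v \in F))); last first.
    by move=> v _; rewrite /c count_uniq_mem.
  rewrite -count_sum -size_filter; apply: uniq_leq_size; first exact: filter_uniq.
  by move=> u; rewrite mem_filter => /andP [].
have cntD : count (fun v => v != xx) D = K.+2.
  have := count_predC (pred1 xx) D; rewrite Ds count_uniq_mem // xD /= => h.
  have e : count (fun v => v != xx) D = count (predC (pred1 xx)) D by apply: eq_count.
  by rewrite e; apply/eqP; rewrite -(eqn_add2l 1) h.
have enew : \sum_(v <- D) ff ((k+T) :: rem v D)
          = \sum_(v <- D | v != xx) bb ((k+T) :: rem v D).
  rewrite [RHS]big_mkcond /=; apply: eq_big_seq => v vD.
  case: eqP => [->|/eqP vx] /=; first by rewrite /ff (negbTE kx).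
  by case: (key v vD vx) => h _; rewrite /ff h.
have esum : \sum_(v <- D | v != xx) bb ((k+T) :: rem v D)
            + \sum_(v <- D | v != xx) c v = K.+2 * bb D.
  rewrite -big_split /= big_seq_cond.
  rewrite (eq_bigr (fun _ => bb D)); last first.
    by move=> v /andP [vD vx]; case: (key v vD vx).
  by rewrite -big_seq_cond big_const_seq iter_addn_0 cntD mulnC.
have sumc2 : \sum_(v <- D | v != xx) c v <= \sum_(v <- D) c v.
  rewrite [X in _ <= X]big_mkcond /= big_mkcond /=; apply: leq_sum => v _.
  by case: (_ != _).
have bJ : K.+2 <= bb D + JJ T by apply: IH1.
rewrite /Inv eJ xD; split.
- move=> E; rewrite eact mem_cat => /orP [/oldE/IH1 h hx|/mapP [v vD ->] hx]; rewrite /=.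
    have := h hx; lia.
  have vx : v != xx by apply/eqP => e; move: hx; rewrite e (negbTE kx).
  case: (key v vD vx) => _ h2; have := c1 v; lia.
- rewrite /= addn1.
  have hG : K * Gf K (JJ T).+1 <= K * Gf K (JJ T) + K * bb D.
    rewrite /= mulnDr leq_add2l leq_mul2l; apply/orP; right; lia.
  have fD : ff D = bb D by rewrite /ff xD.
  move: IH2; rewrite eS eS1 enew fD.
  lia.
Qed.


Lemma inv_all n : t + n <= m -> Inv (t + n).
Proof.
elim: n => [|n IH] h; first by rewrite addn0; apply: base.
rewrite addnS; apply: step; [lia|lia|apply: IH; lia].
Qed.

Lemma SS_N : SS m = \sum_(u <- CC) Nstar k m s xx u.
Proof.
rewrite /SS /Nstar.
rewrite (eq_bigr (fun E => \sum_(u <- CC) ((xx \in E) && (u \in E) : nat))); last first.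
  move=> E _; rewrite /ff; case: (xx \in E) => /=; first by rewrite /bb count_sum.
  by rewrite big1.
rewrite exchange_big /=; apply: eq_bigr => u _; by rewrite count_sum.
Qed.

Lemma deg_bound : degA k m s xx <= k + JJ m.
Proof.
case: CCprop => Cu Cs Cb.
have bx : born k xx = t by rewrite /born; case: ifP; lia.
rewrite /degA.
apply: (@leq_trans (count (predU (fun y => y \in CC)
   (fun y => (k <= y) && (xx \in chosen k s (born k y)))) (iota 0 (k + m)))).
  apply: sub_count => y; rewrite /adjA bx => /andP [_ /or3P [/andP [h _]|/andP [_ h]|h]];
  rewrite /= ?h ?orbT //; lia.
have := count_predUI (fun y => y \in CC) (fun y => (k <= y) && (xx \in chosen k s (born k y)))
  (iota 0 (k + m)).
move=> h; apply: (@leq_trans (count (fun y => y \in CC) (iota 0 (k + m)) +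
   count (fun y => (k <= y) && (xx \in chosen k s (born k y))) (iota 0 (k + m)))).
  by rewrite -h leq_addr.
apply: leq_add.
  rewrite -size_filter; apply: (@leq_trans (size CC)); last by rewrite Cs. apply: uniq_leq_size; first by rewrite filter_uniq // iota_uniq.
  by move=> u; rewrite mem_filter => /andP [-> _].
rewrite iotaD count_cat add0n.
rewrite (@eq_in_count _ _ pred0 (iota 0 k)); last by move=> y; rewrite mem_iota /= => hy; have -> : (k <= y) = false by lia.
rewrite count_pred0 add0n.
have -> : iota k m = [seq K.+2 + i | i <- iota 1 m] by rewrite -iotaDl addn1.
rewrite count_map /JJ; rewrite leq_eqVlt; apply/orP; left; apply/eqP; apply: eq_in_count => T';
  rewrite mem_iota => hT /=; (have -> : born k (K.+2 + T') = T' by rewrite /born; case: ifP; lia);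
  (have -> : k <= K.+2 + T' by lia); by [].
Qed.

End Main.

Lemma Gf_le K j d : Gf K j <= Gf K (j + d).
Proof. elim: d => [|d IH]; first by rewrite addn0. rewrite addnS /=; lia. Qed.

Lemma Gf_closed K j : j <= K.+2 -> 2 * Gf K j + (K.+2 - j) * (K.+3 - j) = K.+2 * K.+3.
Proof.
elim: j => [|j IH] h; first by rewrite /= !subn0.
have [d ed] : exists d, K.+2 = j + d.+1 by exists (K.+2 - j.+1); lia.
have e1 : K.+2 - j = d.+1 by lia.
have e2 : K.+3 - j = d.+2 by lia.
have e3 : K.+2 - j.+1 = d by lia.
have e4 : K.+3 - j.+1 = d.+1 by lia.
move: (IH ltac:(lia)); rewrite /= e1 e2 e3 e4 => IH'. nia.
Qed.

Theorem lemma13 (k m : nat) (s : seq nat) (par : nat -> nat) :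
  3 <= k -> 1 <= m ->
  realization k m s ->
  forest_parent k m s par ->
  forall x y : nat,
    edgeF k m par x y ->
    born k y < born k x ->
    2 * k - 1 <= degA k m s x ->
    (k - 1) ^ 2 <= 2 * Nstar k m s x y.
Proof.
move=> k3 m1 real fp x y exy bxy deg.
have [K eK] : exists K, k = K.+3 by exists (k - 3); lia.
subst k.
case/orP: exy => /andP [/andP [kx xm] /eqP py]; last first.
  have [hin _] := fp (y - K.+3 + 1) ltac:(lia).
  move: hin; have -> : K.+3 + (y - K.+3 + 1) - 1 = y by lia.
  rewrite py => /chosen_bound h.
  move: bxy; rewrite /born; case: ifP; case: ifP; lia.
have [t [t1 tm ex]] : exists t, [/\ 0 < t, t <= m & x = K.+3 + t.-1].
  by exists (x - K.+3 + 1); split; lia.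
subst x.
have := inv_all t1 tm real (_ : t + (m - t) <= m); rewrite subnKC // => /(_ ltac:(lia)).
case=> _ hS.
have hd := deg_bound t1 tm real.
have hJ : K.+2 <= JJ K s t m by lia.
have hG := Gf_le K K.+2 (JJ K s t m - K.+2).
rewrite subnKC // in hG.
have hC := Gf_closed (K := K) (leqnn K.+2).
rewrite subnn mul0n addn0 in hC.
rewrite SS_N // in hS.
have [_ Cs _] := CCprop t1 tm real.
have [_ hmax] := fp t ltac:(lia).
move: hmax; have -> : K.+3 + t - 1 = K.+3 + t.-1 by lia.
rewrite py => hmax.
have hsum : \sum_(u <- chosen K.+3 s t) Nstar K.+3 m s (K.+3 + t.-1) u
    <= K.+3 * Nstar K.+3 m s (K.+3 + t.-1) y.
  apply: (@leq_trans (\sum_(u <- chosen K.+3 s t) Nstar K.+3 m s (K.+3 + t.-1) y));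
    last by rewrite sum_const Cs.
  rewrite big_seq [X in _ <= X]big_seq; apply: leq_sum => u; exact: hmax.
set N := Nstar K.+3 m s (K.+3 + t.-1) y in hsum *.
set G := Gf K (JJ K s t m) in hS hG.
set G0 := Gf K K.+2 in hG hC.
rewrite -[K.+3 - 1]/K.+2.
have : K.+3 * K.+2 ^ 2 <= K.+3 * (2 * N) by nia.
by rewrite leq_pmul2l.
Qed.
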